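(* Let $J\ge 1$ and $K_1,\dots,K_J\ge 1$. For $j=1,\dots,J$ let $\mathbf{z}_j$ be a continuous latent variable and $c_j\in\{1,\dots,K_j\}$ a discrete variable. Write $\vec{\mathbf{z}}=(\mathbf{z}_1,\dots,\mathbf{z}_J)$ and $\mathbf{c}=(c_1,\dots,c_J)\in\mathcal{C}:=\prod_{j=1}^J\{1,\dots,K_j\}$. Suppose the prior factorises as $p_\theta(\vec{\mathbf{z}},\mathbf{c})=\prod_{j=1}^J p_\theta(\mathbf{z}_j,c_j)$, with $p_\theta(\mathbf{z}_j,c_j)=p_\theta(\mathbf{z}_j\mid c_j)p_\theta(c_j)$, and let $p_\theta(\mathbf{c}\mid\vec{\mathbf{z}})$ and $p_\theta(c_j\mid\mathbf{z}_j)$ be the corresponding posteriors. Fix an input $\mathbf{x}$ and let $q_\phi(\vec{\mathbf{z}}\mid\mathbf{x})=\prod_{j=1}^J q_\phi(\mathbf{z}_j\mid\mathbf{x})$ be any factorised probability distribution over $\vec{\mathbf{z}}$. For each $j$ define $$Z_j(q_\phi(\mathbf{z}_j\mid\mathbf{x})):=\sum_{c_j=1}^{K_j}\exp\left(\mathbb{E}_{q_\phi(\mathbf{z}_j\mid\mathbf{x})}\log p_\theta(c_j\mid\mathbf{z}_j)\right),\qquad \pi_j(c_j\mid q_\phi(\mathbf{z}_j\mid\mathbf{x})):=\frac{\exp\left(\mathbb{E}_{q_\phi(\mathbf{z}_j\mid\mathbf{x})}\log p_\theta(c_j\mid\mathbf{z}_j)\right)}{Z_j(q_\phi(\mathbf{z}_j\mid\mathbf{x}))}$$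 for $c_j=1,\dots,K_j$. Then, over all probability distributions $q_\phi(\mathbf{c}\mid\mathbf{x})$ on $\mathcal{C}$, the quantity $\mathbb{E}_{q_\phi(\vec{\mathbf{z}}\mid\mathbf{x})}\mathrm{KL}\left[q_\phi(\mathbf{c}\mid\mathbf{x})\,\|\,p_\theta(\mathbf{c}\mid\vec{\mathbf{z}})\right]$ is minimised by $q_\phi(\mathbf{c}\mid\mathbf{x})=\prod_{j=1}^J\pi_j(c_j\mid q_\phi(\mathbf{z}_j\mid\mathbf{x}))$, and its minimum value is $-\sum_{j=1}^J\log Z_j(q_\phi(\mathbf{z}_j\mid\mathbf{x}))$.
   Context: $\mathrm{KL}[q\|p]=\sum_{\mathbf{c}} q(\mathbf{c})\log\frac{q(\mathbf{c})}{p(\mathbf{c})}$ is the Kullback–Leibler divergence between distributions on the finite set $\mathcal{C}$. The expectations $\mathbb{E}_{q_\phi(\mathbf{z}_j\mid\mathbf{x})}\log p_\theta(c_j\mid\mathbf{z}_j)$ are assumed to be well defined and finite for all $j$ and $c_j$. *)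

(* Defs.v *)
From HB Require Import structures.
From mathcomp Require Import all_boot all_order all_algebra.
From mathcomp Require Import all_classical all_reals all_analysis.
Set Implicit Arguments.
Unset Strict Implicit.
Unset Printing Implicit Defensive.
Import Order.TTheory GRing.Theory Num.Theory.
Import numFieldNormedType.Exports.

Local Open Scope classical_set_scope.
Local Open Scope ring_scope.

Definition is_distr (C : finType) (R : realType) (q : C -> R) : Prop :=
  (forall c, 0 <= q c) /\ \sum_(c : C) q c = 1.

(* KL[q || p] = sum_c q(c) log (q(c)/p(c))  (terms with q(c) = 0 vanish). *)
Definition KLdiv (C : finType) (R : realType) (q p : C -> R) : R :=
  \sum_(c : C) q c * ln (q c / p c).

(* Bayes posterior p(c | z) = p(z | c) p(c) / sum_c' p(z | c') p(c')
   for a single pair (z_j, c_j), with class-conditional density f and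
   prior weights w. *)
Definition cpost (K : nat) (R : realType) (T : Type)
  (f : T -> 'I_K -> R) (w : 'I_K -> R) (z : T) (c : 'I_K) : R :=
  f z c * w c / \sum_(c' < K) f z c' * w c'.

Notation cspace J K := {dffun forall j : 'I_J, 'I_(K j)}.

(* Joint Bayes posterior p(c | zvec) computed from the factorised prior
   p(zvec, c) = prod_j p(z_j | c_j) p(c_j); zvec is observed through its
   coordinate projections pr j. *)
Definition jpost (J : nat) (K : 'I_J -> nat) (R : realType) (Zv : Type)
  (Z : 'I_J -> Type) (pr : forall j, Zv -> Z j)
  (f : forall j, Z j -> 'I_(K j) -> R) (w : forall j, 'I_(K j) -> R)
  (zv : Zv) (c : cspace J K) : R :=
  (\prod_(j < J) (f j (pr j zv) (c j) * w j (c j))) /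
  \sum_(c' : cspace J K) \prod_(j < J) (f j (pr j zv) (c' j) * w j (c' j)).

Definition Elogpost (d : measure_display) (T : measurableType d) (R : realType)
  (q : {measure set T -> \bar R}) (K : nat) (f : T -> 'I_K -> R) (w : 'I_K -> R)
  (c : 'I_K) : R :=
  Rintegral q setT (fun z => ln (cpost f w z c)).

Definition Zpart (d : measure_display) (T : measurableType d) (R : realType)
  (q : {measure set T -> \bar R}) (K : nat) (f : T -> 'I_K -> R) (w : 'I_K -> R) : R :=
  \sum_(c < K) expR (Elogpost q f w c).

Definition pipost (d : measure_display) (T : measurableType d) (R : realType)
  (q : {measure set T -> \bar R}) (K : nat) (f : T -> 'I_K -> R) (w : 'I_K -> R)
  (c : 'I_K) : R :=
  expR (Elogpost q f w c) / Zpart q f w.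

(* Main.v *)
Require Import Defs.
From HB Require Import structures.
From mathcomp Require Import all_boot all_order all_algebra.
From mathcomp Require Import all_classical all_reals all_analysis.
From mathcomp Require Import ring lra.
From mathcomp Require Import measurable_realfun.
Set Implicit Arguments.
Unset Strict Implicit.
Unset Printing Implicit Defensive.
Import Order.TTheory GRing.Theory Num.Theory.
Import numFieldNormedType.Exports.
Local Open Scope classical_set_scope.
Local Open Scope ring_scope.
Lemma ln_prod (R : realType) (I : Type) (r : seq I) (P : pred I) (x : I -> R) :
  (forall i, P i -> 0 < x i) ->
  0 < \prod_(i <- r | P i) x i /\ ln (\prod_(i <- r | P i) x i) = \sum_(i <- r | P i) ln (x i).
Proof.
move=> hx; apply: (big_ind2 (fun a b => 0 < a /\ ln a = b)).
- by rewrite ln1.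
- move=> a1 b1 a2 b2 [a1p <-] [a2p <-]; split; first exact: mulr_gt0.
  by rewrite lnM ?posrE.
- by move=> i Pi; split; [exact: hx|].
Qed.

Lemma gibbs_term (R : realType) (a b : R) : 0 <= a -> 0 < b ->
  a - b <= a * (ln a - ln b).
Proof.
move=> a0 b0; have [->|ap] := eqVneq a 0; first by rewrite mul0r sub0r lerNl oppr0 ltW.
have a0' : 0 < a by rewrite lt_def ap a0.
have h := @le_ln1Dx R (b / a - 1).
have : ln (b / a) <= b / a - 1.
  by move: h; rewrite [1 + _]addrCA subrr addr0; apply; rewrite ltrBrDl subrr divr_gt0.
rewrite ln_div ?posrE // => hl.
have := ler_wpM2l a0 hl; rewrite !mulrBr mulr1 mulrCA divff // mulr1.
move=> h2; lra.
Qed.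
Lemma sum_dffun_prod (R : comNzRingType) (I : finType) (T_ : I -> finType)
  (g : forall i, T_ i -> R) :
  \sum_(c : {dffun forall i, T_ i}) \prod_i g i (c i) =
  \prod_i \sum_(t : T_ i) g i t.
Proof.
rewrite (eq_bigr (fun i => \sum_(j in tagged_with T_ i) untag 0 (g i) j)); last first.
  by move=> i _; rewrite (big_tag g i).
rewrite bigA_distr_big_dep.
pose P_ := fun i => [ffun t : T_ i => g i t].
transitivity (\sum_(t : fprod T_) \prod_(i in I) P_ i (t i)); last first.
  rewrite big_fprod; apply: eq_bigr => f _; apply: eq_bigr => i _.
  by congr (untag _ _ _); apply: funext => t; rewrite /P_ ffunE.
rewrite (reindex (@dffun_of_fprod I T_)); last exact/onW_bij/dffun_of_fprod_bij.
by apply: eq_bigr => t _; apply: eq_bigr => i _; rewrite /P_ !ffunE.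
Qed.

Lemma alg_main (R : realType) (J : nat) (K : 'I_J -> nat) (L : forall j, 'I_(K j) -> R) :
  (forall j, 0 < K j)%N ->
  let Zp j := \sum_(c < K j) expR (L j c) in
  let qs : cspace J K -> R := fun c => \prod_j (expR (L j (c j)) / Zp j) in
  let V (qc : cspace J K -> R) := \sum_c (qc c * ln (qc c) - qc c * \sum_j L j (c j)) in
  [/\ is_distr qs, forall qc, is_distr qc -> V qs <= V qc & V qs = - \sum_j ln (Zp j)].
Proof.
move=> hK Zp qs V.
have Zp0 j : 0 < Zp j.
  rewrite /Zp (bigD1 (Ordinal (hK j))) //=.
  have := expR_gt0 (L j (Ordinal (hK j))).
  have : 0 <= \sum_(i < K j | i != Ordinal (hK j)) expR (L j i).
    by apply: sumr_ge0 => i _; exact: expR_ge0.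
  lra.
have qs0 c : 0 < qs c.
  by apply: prodr_gt0 => j _; apply: divr_gt0 => //; exact: expR_gt0.
have qs1 : \sum_c qs c = 1.
  rewrite /qs (sum_dffun_prod (fun j (t : 'I_(K j)) => expR (L j t) / Zp j)); apply: big1 => j _.
  by rewrite -mulr_suml divff //; exact: lt0r_neq0 (Zp0 j).
set S := \sum_j ln (Zp j).
have lnqs (c : cspace J K) : \sum_j L j (c j) = ln (qs c) + S.
  have [_ ->] := @ln_prod R _ (index_enum 'I_J) predT (fun j => expR (L j (c j)) / Zp j)
     (fun j _ => divr_gt0 (expR_gt0 _) (Zp0 j)).
  rewrite /S -big_split /=; apply: eq_bigr => j _.
  by rewrite ln_div ?posrE ?expR_gt0 // expRK subrK.
have VE (qc : cspace J K -> R) : is_distr qc -> V qc = \sum_c qc c * (ln (qc c) - ln (qs c)) - S.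
  move=> [_ qc1]; rewrite /V.
  have -> : S = \sum_c qc c * S by rewrite -mulr_suml qc1 mul1r.
  rewrite -sumrB; apply: eq_bigr => c _; rewrite lnqs; ring.
have dqs : is_distr qs by split => // c; exact: ltW.
split => //.
  move=> qc hqc; rewrite !VE //.
  rewrite lerD2r.
  have -> : \sum_c qs c * (ln (qs c) - ln (qs c)) = 0.
    by apply: big1 => c _; rewrite subrr mulr0.
  case: hqc => qc0 qc1.
  apply: (@le_trans _ _ (\sum_c (qc c - qs c))).
    by rewrite sumrB qc1 qs1 subrr.
  by apply: ler_sum => c _; apply: gibbs_term.
rewrite VE //.
have -> : \sum_c qs c * (ln (qs c) - ln (qs c)) = 0.
  by apply: big1 => c _; rewrite subrr mulr0.
by rewrite sub0r.
Qed.
Lemma marginal (R : realType) (J : nat) (dZ : 'I_J -> measure_display)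
  (Z : forall j, measurableType (dZ j)) (dv : measure_display) (Zv : measurableType dv)
  (pr : forall j, Zv -> Z j) (Q : probability Zv R) (q : forall j, probability (Z j) R) :
  (forall A : forall j, set (Z j), (forall j, measurable (A j)) ->
     Q (\bigcap_(j in setT) (pr j @^-1` A j)) = (\prod_(j < J) q j (A j))%E) ->
  forall j (A : set (Z j)), measurable A -> Q (pr j @^-1` A) = q j A.
Proof.
move=> hQ j A mA.
pose B := fun i => [set z : Z i | forall e : i = j, A (eq_rect i Z z j e)].
have BE : B j = A.
  apply/seteqP; split => z /=; first by move/(_ erefl).
  by move=> Az e; rewrite (eq_axiomK e).
have Bi i : i != j -> B i = setT.
  move=> /eqP ij; apply/seteqP; split => // z _ e; by [].
have mB i : measurable (B i).
  by case: (eqVneq i j) => [->|/Bi ->]; rewrite ?BE.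
have -> : pr j @^-1` A = \bigcap_(i in setT) (pr i @^-1` B i).
  apply/seteqP; split => x /=.
    move=> Ax i _ e; subst j; exact: Ax.
  by move/(_ j I); rewrite BE.
rewrite hQ // (bigD1 j) //= BE big1 ?mule1 // => i hi.
by rewrite Bi // probability_setT.
Qed.
Lemma transfer (R : realType) d1 d2 (X : measurableType d1) (Y : measurableType d2)
  (phi : X -> Y) (mphi : measurable_fun setT phi)
  (Q : {measure set X -> \bar R}) (q : {measure set Y -> \bar R})
  (hm : forall A, measurable A -> Q (phi @^-1` A) = q A) (h : Y -> R) :
  q.-integrable setT (EFin \o h) ->
  Q.-integrable setT (EFin \o (h \o phi)) /\
  (\int[Q]_x (h (phi x))%:E = \int[q]_y (h y)%:E)%E.
Proof.
move=> hint.
have mh : measurable_fun setT h by apply/measurable_EFinP; exact: measurable_int hint.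
have eqm (F : Y -> \bar R) : (\int[q]_y F y = \int[pushforward Q phi]_y F y)%E.
  have := (@eq_measure_integral _ _ R setT (pushforward Q phi) q F).
  by apply => A mA _; rewrite -hm.
have mhp : measurable_fun setT (h \o phi) by exact: measurableT_comp.
have iQ : Q.-integrable setT (EFin \o (h \o phi)).
  apply/integrableP; split; first exact/measurable_EFinP.
  move/integrableP : hint => [_]; rewrite eqm.
  rewrite ge0_integral_pushforward //; last first.
    by apply: measurableT_comp => //; exact/measurable_EFinP.
split => //.
by rewrite eqm integral_pushforward //; exact/measurable_EFinP.
Qed.

Lemma measurable_inv_ge0 d (T : measurableType d) (R : realType) (h : T -> R) :
  (forall x, 0 <= h x) -> measurable_fun setT h -> measurable_fun setT (fun x => (h x)^-1).
Proof.
move=> h0 mh.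
have -> : (fun x => (h x)^-1) = (fun x => h x `^ (-1)).
  by apply: funext => x; rewrite powR_inv1.
exact: measurableT_comp (measurable_powR _) mh.
Qed.

Unset Implicit Arguments.
Set Strict Implicit.
Set Printing Implicit Defensive.

Theorem theorem2 (R : realType) (J : nat) (K : 'I_J -> nat)
  (dZ : 'I_J -> measure_display) (Z : forall j, measurableType (dZ j))
  (dv : measure_display) (Zv : measurableType dv)
  (pr : forall j, Zv -> Z j)
  (mu : forall j, {measure set Z j -> \bar R})
  (f : forall j, Z j -> 'I_(K j) -> R)
  (w : forall j, 'I_(K j) -> R)
  (Q : probability Zv R)
  (q : forall j, probability (Z j) R) :
  (0 < J)%N ->
  (forall j, 0 < K j)%N ->
  (* zvec = (z_1, ..., z_J) : measurable coordinate projections *)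
  (forall j, measurable_fun setT (pr j)) ->
  (* prior: p(z_j | c_j) is a probability density f j . c_j w.r.t. mu j *)
  (forall j z c, 0 <= f j z c) ->
  (forall j c, measurable_fun setT (fun z => f j z c)) ->
  (forall j c, (\int[mu j]_z (f j z c)%:E = 1)%E) ->
  (* prior: p(c_j) is a probability distribution w j *)
  (forall j, is_distr (w j)) ->
  (* q(zvec | x) = prod_j q(z_j | x) : factorised, with marginals q j *)
  (forall A : forall j, set (Z j), (forall j, measurable (A j)) ->
     Q (\bigcap_(j in setT) (pr j @^-1` A j)) = (\prod_(j < J) q j (A j))%E) ->
  (* E_{q(z_j|x)} log p(c_j | z_j) is well defined and finite *)
  (forall j c, {ae q j, forall z, 0 < cpost (f j) (w j) z c}) ->
  (forall j c, (q j).-integrable setT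
                 (fun z => (ln (cpost (f j) (w j) z c))%:E)) ->
  let qstar : cspace J K -> R :=
    fun c => \prod_(j < J) pipost (q j) (f j) (w j) (c j) in
  let EKL : (cspace J K -> R) -> \bar R :=
    fun qc => (\int[Q]_zv (KLdiv qc (jpost pr f w zv))%:E)%E in
  [/\ is_distr qstar,
      (forall qc : cspace J K -> R, is_distr qc -> (EKL qstar <= EKL qc)%E)
    & EKL qstar = (- \sum_(j < J) ln (Zpart (q j) (f j) (w j)))%:E].
Proof.
move=> hJ hK hpr hf0 hfm hmu hw hQ hae hint qstar EKL.
have marg := marginal hQ.
pose g j c z := ln (cpost (f j) (w j) z c).
pose L j c := Elogpost (q j) (f j) (w j) c.
have hB j c : Q.-integrable setT (EFin \o (g j c \o pr j)) /\
    (\int[Q]_zv (g j c (pr j zv))%:E = (L j c)%:E)%E.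
  have [i1 e1] := transfer (hpr j) (marg j) (hint j c).
  split => //; rewrite e1 /L /Elogpost /Rintegral fineK //.
  exact: integrable_fin_num.
have [dqs hmin hval] := alg_main L hK.
pose V (qc : cspace J K -> R) := \sum_c (qc c * ln (qc c) - qc c * \sum_j L j (c j)).
suff key : forall qc, is_distr qc -> EKL qc = (V qc)%:E.
  split => //.
    by move=> qc hqc; rewrite !key // lee_fin; exact: hmin.
  by rewrite key //; congr (_%:E); exact: hval.
have w0 j c : 0 <= w j c by case: (hw j).
have mjp (c : cspace J K) : measurable_fun setT (fun zv => jpost pr f w zv c).
  apply: measurable_funM.
    apply: measurable_prod => j _; apply: measurable_funM; last exact: measurable_cst.
    exact: measurableT_comp (hfm j (c j)) (hpr j).
  apply: measurable_inv_ge0.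
    by move=> x; apply: sumr_ge0 => c' _; apply: prodr_ge0 => j _; apply: mulr_ge0.
  apply: measurable_sum => c'; apply: measurable_prod => j _.
  apply: measurable_funM; last exact: measurable_cst.
  exact: measurableT_comp (hfm j (c' j)) (hpr j).
have jp0 zv (c : cspace J K) : 0 <= jpost pr f w zv c.
  apply: divr_ge0; first by apply: prodr_ge0 => j _; apply: mulr_ge0.
  by apply: sumr_ge0 => c' _; apply: prodr_ge0 => j _; apply: mulr_ge0.
have mKL qc : measurable_fun setT (fun zv => KLdiv qc (jpost pr f w zv)).
  apply: measurable_sum => c; apply: measurable_funM; first exact: measurable_cst.
  apply: measurableT_comp; first exact: measurable_ln.
  apply: measurable_funM; first exact: measurable_cst.
  exact: measurable_inv_ge0.
have aeall : \forall zv \ae Q, forall j c, 0 < cpost (f j) (w j) (pr j zv) c.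
  apply: filter_forall => j; apply: filter_forall => c.
  have [N [mN qN0 sN]] := hae j c.
  exists (pr j @^-1` N); split.
  - by have := hpr j measurableT _ mN; rewrite setTI.
  - by rewrite marg.
  - by move=> zv /= hn; apply: sN.
have jpE zv (c : cspace J K) :
    jpost pr f w zv c = \prod_j cpost (f j) (w j) (pr j zv) (c j).
  rewrite /jpost /cpost (sum_dffun_prod (fun j t => f j (pr j zv) t * w j t)).
  by rewrite prodf_div.
move=> qc [qc0 qc1].
pose G zv := \sum_c (qc c * ln (qc c) - qc c * \sum_j g j (c j) (pr j zv)).
have KLG : \forall zv \ae Q, setT zv -> KLdiv qc (jpost pr f w zv) = G zv.
  apply: filterS aeall => zv hz _.
  rewrite /KLdiv /G; apply: eq_bigr => c _.
  have [pp lp] := @ln_prod R _ (index_enum 'I_J) predT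
    (fun j => cpost (f j) (w j) (pr j zv) (c j)) (fun j _ => hz j (c j)).
  have [->|qcp] := eqVneq (qc c) 0; first by rewrite !mul0r subrr.
  have qcp' : 0 < qc c by rewrite lt_def qcp qc0.
  by rewrite jpE ln_div ?posrE // lp mulrBr.
pose A := \sum_c qc c * ln (qc c).
pose H zv := (A%:E + \sum_(c : cspace J K) \sum_j ((- qc c)%:E * (g j (c j) (pr j zv))%:E))%E.
have GE : (fun zv => (G zv)%:E) = H.
  apply: funext => zv; rewrite /H.
  rewrite (_ : \sum_c \sum_j _ = (\sum_c \sum_j (- qc c * g j (c j) (pr j zv)))%:E); last first.
    rewrite -sumEFin; apply: eq_bigr => c _; rewrite -sumEFin; apply: eq_bigr => j _.
    by rewrite EFinM.
  rewrite -EFinD; congr (_%:E).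
  rewrite /A /G -big_split /=; apply: eq_bigr => c _; rewrite mulr_sumr -sumrN.
  by congr (_ + _); apply: eq_bigr => j _; rewrite mulNr.
have iT (c : cspace J K) j : Q.-integrable setT
    (fun zv => ((- qc c)%:E * (g j (c j) (pr j zv))%:E)%E).
  exact: (integrableZl measurableT (- qc c) (hB j (c j)).1).
have iS (c : cspace J K) : Q.-integrable setT
    (fun zv => \sum_j ((- qc c)%:E * (g j (c j) (pr j zv))%:E)%E).
  by apply: (integrable_sum measurableT) => j _; exact: iT.
have iSS : Q.-integrable setT
    (fun zv => \sum_(c : cspace J K) \sum_j ((- qc c)%:E * (g j (c j) (pr j zv))%:E)%E).
  by apply: (integrable_sum measurableT) => c _; exact: iS.
have icst : Q.-integrable setT (fun _ => A%:E).
  exact: (finite_measure_integrable_cst Q A measurableT).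
have iH : Q.-integrable setT H by apply: (integrableD measurableT).
have intH : (\int[Q]_zv H zv = (V qc)%:E)%E.
  rewrite /H (integralD measurableT icst iSS).
  rewrite integral_cst // [X in (_ * X + _)%E](_ : _ = 1%E) ?mule1; last first.
    exact: probability_setT.
  rewrite (integral_sum measurableT iS).
  under eq_bigr => c _ do rewrite (integral_sum measurableT (iT c)).
  under eq_bigr => c _ do under eq_bigr => j _ do
    rewrite (integralZl measurableT (hB j (c j)).1) (hB j (c j)).2.
  rewrite /V /A.
  under eq_bigr => c _ do under eq_bigr => j _ do rewrite -EFinM.
  under eq_bigr => c _ do rewrite sumEFin.
  rewrite sumEFin -EFinD; congr (_%:E).
  rewrite -big_split /=; apply: eq_bigr => c _; rewrite mulr_sumr -sumrN.
  by congr (_ + _); apply: eq_bigr => j _; rewrite mulNr.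
rewrite /EKL (ae_eq_integral (fun zv => (G zv)%:E)) //.
- by rewrite GE; exact: intH.
- exact/measurable_EFinP/mKL.
- by rewrite GE; exact: measurable_int iH.
- by apply: filterS KLG => zv h /h ->.
Qed.
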